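(* Let $G$ be an extraspecial or almost extraspecial $2$-group of order $2^n$, $n\geq 3$. Then $e_2(G)\leq e_2(D_8\times C_2^{n-3})$.
   Context: A finite $2$-group $G$ is extraspecial if $Z(G)=G'=\Phi(G)$ has order $2$, and almost extraspecial if $G'=\Phi(G)$ has order $2$ and $Z(G)\cong C_4$. For a finite $2$-group $H$ and $i\ge 2$, $e_i(H)$ denotes the number of elementary abelian subgroups of $H$ of order $2^i$ containing the Frattini subgroup $\Phi(H)$. $D_8$ is the dihedral group of order $8$, $C_2^m$ the elementary abelian group of order $2^m$. *)

(* Defs.v *)
From mathcomp Require Import all_boot all_fingroup all_solvable.
Set Implicit Arguments.
Unset Strict Implicit.
Unset Printing Implicit Defensive.
Local Open Scope group_scope.

Definition extraspecial2 (gT : finGroupType) (G : {set gT}) : Prop :=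
  [/\ 2.-group G, 'Z(G) = G^`(1), G^`(1) = 'Phi(G) & #|'Z(G)| = 2%N].

Definition almost_extraspecial2 (gT : finGroupType) (G : {set gT}) : Prop :=
  [/\ 2.-group G, G^`(1) = 'Phi(G), #|G^`(1)| = 2%N,
      cyclic 'Z(G) & #|'Z(G)| = 4%N].

Definition e_ (i : nat) (gT : finGroupType) (H : {set gT}) : nat :=
  #|[set A : {group gT} | [&& A \subset H, 2.-abelem A,
                              #|A| == (2 ^ i)%N & 'Phi(H) \subset A]]|.

(* Main.v *)
From mathcomp Require Import all_boot all_fingroup all_solvable zify.
Require Import Defs.
Set Implicit Arguments. Unset Strict Implicit. Unset Printing Implicit Defensive.
Local Open Scope group_scope.

Section L.
Variable gT : finGroupType.
Implicit Types G H : {group gT}.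

Definition inv2 (G : {set gT}) := [set x in G | x ^+ 2 == 1].

Lemma half_sub G H : H \subset G -> #|G| < 2 * #|H| -> H :=: G.
Proof.
move=> sHG lt; apply: (index1g sHG).
have := Lagrange sHG; have := indexg_gt0 G H.
case: #|G : H| => [|[|k]] //= _ eq; move: lt; rewrite -eq.
by rewrite mulnC ltn_pmul2r ?cardG_gt0.
Qed.

Lemma commute_inv2 (x y : gT) : x ^+ 2 = 1 -> y ^+ 2 = 1 -> (x * y) ^+ 2 = 1 -> commute x y.
Proof.
move=> x2 y2 xy2.
have ix (z : gT) : z ^+ 2 = 1 -> z^-1 = z by move=> z2; apply/eqP; rewrite eq_invg_mul; move: z2; rewrite expgS expg1 => ->.
by rewrite /commute -{1}(ix _ xy2) invMg (ix _ x2) (ix _ y2).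
Qed.

Lemma three_quarters G : ~~ abelian G -> 4 * #|inv2 G| <= 3 * #|G|.
Proof.
move=> nab; apply: contraR nab; rewrite -ltnNge => big.
set I := inv2 G.
have sIG : I \subset G by apply/subsetP=> z; rewrite inE => /andP[].
have cI : I \subset 'Z(G).
  apply/subsetP=> x Ix; have := Ix; rewrite inE => /andP[Gx x2].
  set J := I :&: (x^-1 *: I).
  have sJC : J \subset 'C_G[x].
    apply/subsetP=> y /setIP[Iy]; rewrite mem_lcoset invgK => Ixy.
    rewrite /I /inv2 !inE in Iy Ixy; case/andP: Iy => Gy y2; case/andP: Ixy => _ xy2.
    by rewrite in_setI Gy /=; apply/cent1P; apply: commute_sym; apply: commute_inv2; apply/eqP.
  have cardJ : #|G| < 2 * #|J|.
    have sU : I :|: x^-1 *: I \subset G.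
      rewrite subUset sIG; apply/subsetP=> z; rewrite mem_lcoset invgK => /(subsetP sIG).
      by rewrite groupMl.
    have := cardsUI I (x^-1 *: I); rewrite card_lcoset -/J.
    have := subset_leq_card sU. move: big; rewrite -/I. set g := #|G|; set i := #|I|; lia.
  have eC := half_sub (subsetIl G 'C[x]) (leq_trans cardJ (leq_mul (leqnn 2) (subset_leq_card sJC))).
  rewrite inE Gx -sub_cent1 /=; rewrite -eC; exact: subsetIr.
apply/center_idP; apply: half_sub (center_sub G) _.
have := subset_leq_card cI; move: big; rewrite -/I; set g := #|G|; set i := #|I|; set z := #|'Z(G)|; lia.
Qed.

Lemma order2_uniq (P : {group gT}) (z w : gT) : #|P| = 2 -> z \in P -> w \in P ->
  z != 1 -> w != 1 -> z = w.
Proof.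
move=> oP Pz Pw nz nw; have h := cardsD1 1 P; rewrite group1 oP /= add1n in h.
case: h => h; have /cards1P[a Ea] : #|P :\ 1| == 1%N by rewrite -h.
have : z \in P :\ 1 by rewrite !inE nz.
have : w \in P :\ 1 by rewrite !inE nw.
by rewrite Ea !inE => /eqP-> /eqP->.
Qed.

Definition e2 (H : {set gT}) :=
  [set A : {group gT} | [&& A \subset H, 2.-abelem A,
                              #|A| == (2 ^ 2)%N & 'Phi(H) \subset A]].

Lemma e2_count (H : {group gT}) : #|'Phi(H)| = 2 -> 2 * #|e2 H| + 2 = #|inv2 H|.
Proof.
move=> oP; set P := 'Phi(H) in oP *; set S := e2 H.
have sPH : P \subset H := Phi_sub H.
have nPH : H \subset 'N(P) := normal_norm (Phi_normal H).
have P2 z : z \in P -> z ^+ 2 = 1 by move=> Pz; rewrite -oP expg_cardG.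
have cPH z x : z \in P -> x \in H -> commute z x.
  move=> Pz Hx; case: (eqVneq z 1) => [->|nz]; first exact: commute_sym (commute1 _).
  apply/commgP/conjg_fixP; apply: (order2_uniq oP) => //; last by rewrite conjg_eq1.
  by rewrite memJ_norm // (subsetP nPH).
have sPI : P \subset inv2 H by apply/subsetP=> z Pz; rewrite inE (subsetP sPH) //= P2.
have cardI : #|inv2 H| = #|inv2 H :\: P| + 2.
  by rewrite -oP -(cardsID P (inv2 H)) (setIidPr sPI) addnC.
rewrite cardI; congr (_ + 2).
have memS (A : {group gT}) : (A \in S) = [&& A \subset H, 2.-abelem A, #|A| == 4 & P \subset A].
  by rewrite inE.
have uniqS x : x \in inv2 H :\: P -> forall A : {group gT},
    (A \in S) && (x \in A) = (A == (P <*> <[x]>)%G).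
  move=> /setDP[]; rewrite inE => /andP[Hx x2] nPx.
  have nx1 : x != 1 by apply: contra nPx => /eqP->; exact: group1.
  have ox : #|<[x]>| = 2 by rewrite -orderE; apply: nt_prime_order => //; apply/eqP.
  have cPx : <[x]> \subset 'C(P).
    by rewrite cycle_subG; apply/centP=> z Pz; apply: commute_sym; apply: cPH.
  have defX : P <*> <[x]> = P * <[x]> := cent_joinEr cPx.
  have oX : #|P <*> <[x]>| = 4.
    by rewrite defX TI_cardMg ?oP ?ox // setIC prime_TIg ?ox ?cycle_subG.
  have XS : (P <*> <[x]>)%G \in S.
    rewrite memS join_subG sPH cycle_subG Hx /= oX eqxx joing_subl andbT /=.
    rewrite andbT; have pr2 : prime 2 by []; apply/(abelemP pr2); split.
      by rewrite abelianY cycle_abelian cPx andbT cyclic_abelian // prime_cyclic // oP.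
    move=> y; rewrite /= defX => /mulsgP[a b Pa xb ->].
    have Hb : b \in H by apply: (subsetP _ b xb); rewrite cycle_subG.
    rewrite expgMn; last exact: cPH.
    by rewrite (P2 a Pa) mul1g -ox expg_cardG.
  move=> A; apply/idP/eqP => [/andP[SA xA] | ->].
    apply: val_inj => /=; apply/eqP; rewrite eq_sym eqEcard oX.
    move: SA; rewrite memS => /and4P[_ _ /eqP-> sPA].
    by rewrite leqnn andbT join_subG sPA cycle_subG xA.
  by rewrite XS /=; apply: (subsetP (joing_subr P <[x]>)); exact: cycle_id.
have h1 x : x \in inv2 H :\: P -> \sum_(A in S) (x \in A) = 1%N.
  move=> Ix; rewrite (eq_bigr (fun A : {group gT} => if x \in A then 1%N else 0%N)) => [|A _]; last first.
    by case: (x \in A).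
  rewrite -big_mkcondr sum1dep_card; apply: (@eq_card1 _ (P <*> <[x]>)%G) => A.
  by rewrite inE /= uniqS.
have h2 (A : {group gT}) : A \in S -> \sum_(x in inv2 H :\: P) (x \in A) = 2%N.
  move=> SA; move: (SA); rewrite memS => /and4P[sAH abA /eqP oA sPA].
  rewrite (eq_bigr (fun x : gT => if x \in A then 1%N else 0%N)) => [|x _]; last first.
    by case: (x \in A).
  rewrite -big_mkcondr sum1dep_card -[2]/(4 - 2) -oA -oP -(cardsDS sPA).
  apply: eq_card => x; rewrite !inE -!andbA; case: (x \in P) => /=; case xA: (x \in A); rewrite ?andbF // andbT.
  have pr2 : prime 2 by []; case/(abelemP pr2): abA => _ /(_ x xA) ->; by rewrite eqxx (subsetP sAH).

apply: (@etrans _ _ (\sum_(x in inv2 H :\: P) \sum_(A in S) nat_of_bool (x \in A))); last first.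
  by rewrite -sum1_card; apply: eq_bigr => x Ix; rewrite h1.
rewrite exchange_big (eq_bigr (fun=> 2%N)) ?sum_nat_const 1?mulnC //.
Qed.

Lemma card_mul_TI (D E : {group gT}) (A B : {set gT}) :
  D :&: E = 1 -> A \subset D -> B \subset E -> #|A * B| = (#|A| * #|B|)%N.
Proof.
move=> tiDE sAD sBE; rewrite -cardsX /mulg /= /set_mulg curry_imset2X.
apply: card_in_imset => -[a1 b1] [a2 b2]; rewrite !inE /= => /andP[Aa1 Bb1] /andP[Aa2 Bb2] eq.
have Da1 := subsetP sAD _ Aa1; have Da2 := subsetP sAD _ Aa2.
have Eb1 := subsetP sBE _ Bb1; have Eb2 := subsetP sBE _ Bb2.
have h : a2^-1 * a1 \in D :&: E.
  rewrite inE groupM ?groupV //=.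
  have -> : a2^-1 * a1 = b2 * b1^-1.
    by apply: (canRL (mulgK b1)); rewrite -mulgA eq mulKg.
  by rewrite groupM ?groupV.
move: h; rewrite tiDE inE => /eqP h.
have ea : a1 = a2 by apply/esym/eqP; rewrite -(invgK a2) eq_invg_mul h.
by move: eq; rewrite ea => /mulgI ->.
Qed.
End L.

Unset Implicit Arguments.

Theorem lemma2p6 (gT : finGroupType) (G : {group gT}) (n : nat)
  (hG : extraspecial2 G \/ almost_extraspecial2 G)
  (hn : 3 <= n) (hord : #|G| = (2 ^ n)%N)
  (kT : finGroupType) (K D E : {group kT})
  (hK : D \x E = K) (hD : D \isog 'D_8) (hE : 2.-abelem E)
  (hEord : #|E| = (2 ^ (n - 3))%N) :
  e_ 2 G <= e_ 2 K.
Proof.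
have [oPG nabG] : #|'Phi(G)| = 2 /\ ~~ abelian G.
  case: hG => [[_ ZG GP oZ] | [_ GP oG' _ _]].
    split; first by rewrite -GP -ZG.
    by apply/negP => /derG1P abG; move: oZ; rewrite ZG abG cards1.
  split; first by rewrite -GP.
  by apply/negP => /derG1P abG; move: oG'; rewrite abG cards1.
have eG := e2_count oPG; have tqG := three_quarters nabG.
have pr2 : prime 2 by [].
have [xy genD] := generators_2dihedral (isT : 1 < 3) hD.
case: xy genD => x y genD _.
have [[_ oX' _] [D'x PhiD oD' _] _ _ _] := dihedral2_structure (isT : 1 < 3) genD hD.
case: (genD) => oD Dx ox _.
have oPD : #|'Phi(D)| = 2 by rewrite PhiD oD'.
have [_ defK cDE tiDE] := dprodP hK.
have pD : 2.-group D by rewrite /pgroup oD.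
have pE : 2.-group E := abelem_pgroup hE.
have oPK : #|'Phi(K)| = 2.
  have /eqP PhiE1 : 'Phi(E) == 1 by rewrite (trivg_Phi pE).
  by rewrite -defK (Phi_mulg pD pE cDE) PhiE1 mulg1.
have eK := e2_count oPK.
have iD : 6 <= #|inv2 D|.
  have := cardsID <[x]> (inv2 D).
  have h1 : 'Phi(D) \subset inv2 D :&: <[x]>.
    rewrite subsetI; apply/andP; split; last by rewrite PhiD D'x cycleX.
    apply/subsetP=> z Pz; rewrite inE (subsetP (Phi_sub D)) //= -oPD expg_cardG ?eqxx // andbT.
  have h2 : D :\: <[x]> \subset inv2 D :\: <[x]>.
    apply/subsetP=> t Dt; move: (Dt); rewrite !inE => /andP[-> ->] /=.
    by rewrite -(oX' t Dt) expg_order.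
  have c1 := subset_leq_card h1; have c2 := subset_leq_card h2.
  rewrite cardsDS ?cycle_subG // -orderE ox oD oPD /= in c1 c2.
  set a := #|_ :&: _| in c1 *; set b := #|_ :\: _| in c2 *. have c3 : 4 <= b := c2. clear c2 => h; rewrite -h; lia.
have iK : #|inv2 D * E| <= #|inv2 K|.
  apply: subset_leq_card; apply/subsetP=> z /mulsgP[a e Ia Ee ->].
  move: Ia; rewrite !inE => /andP[Da a2].
  rewrite -defK mem_mulg //= expgMn; last first.
    by apply: commute_sym; apply: (centP (subsetP cDE e Ee)).
  case/(abelemP pr2): hE => _ /(_ e Ee) ->; rewrite mulg1 //.
rewrite (card_mul_TI tiDE) ?hEord // in iK; last by apply/subsetP=> z; rewrite inE => /andP[].
rewrite /e_.
have h8 : (2 ^ n = 8 * 2 ^ (n - 3))%N by rewrite -{1}(subnKC hn) expnD.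
move: eG eK tqG iD iK; rewrite /e2 hord h8.
set u := (2 ^ (n - 3))%N; set g1 := #|[set A : {group gT} | _]|; set k1 := #|[set A : {group kT} | _]|.
set iG := #|inv2 G|; set iKK := #|inv2 K|; set iDD := #|inv2 D|.
move=> *; nia.
Qed.
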